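(* Let $X$ be a real Banach space with dual $X^*$ and let $T:X\rightrightarrows X^*$ be a set-valued map. If $-T$ is pseudo-monotone, then $T$ is lower sign-continuous at every point of $\operatorname{int}(\operatorname{dom}(T))$.
   Context: $\operatorname{dom}(T)=\{x\in X: T(x)\neq\emptyset\}$ and $\langle\cdot,\cdot\rangle$ is the duality pairing. A set-valued map $S:X\rightrightarrows X^*$ is pseudo-monotone if for all $x,y\in X$: whenever there exists $x^*\in S(x)$ with $\langle x^*,y-x\rangle\geq 0$, then $\langle y^*,x-y\rangle\leq 0$ for all $y^*\in S(y)$ (here $-T$ is the map $x\mapsto\{-x^*: x^*\in T(x)\}$). $T$ is lower sign-continuous at $x\in\operatorname{dom}(T)$ if for every $v\in X$: if $\inf_{x_t^*\in T(x_t)}\langle x_t^*,v\rangle\geq 0$ for all $t\in\,]0,1[$, where $x_t=x+tv$, then $\inf_{x^*\in T(x)}\langle x^*,v\rangle\geq 0$. *)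

(* Defs.v *)
From HB Require Import structures.
From mathcomp Require Import all_boot all_order all_algebra.
From mathcomp Require Import all_classical all_reals all_analysis.
Set Implicit Arguments. Unset Strict Implicit. Unset Printing Implicit Defensive.
Import Order.TTheory GRing.Theory Num.Theory.
Import numFieldNormedType.Exports.
Local Open Scope classical_set_scope.
Local Open Scope ring_scope.

Record dual (R : realType) (X : normedModType R) := Dual {
  dual_fun :> X -> R;
  dual_linear : forall (a : R) (u v : X), dual_fun (a *: u + v) = a * dual_fun u + dual_fun v;
  dual_cont : continuous dual_fun }.
Arguments dual_cont {R X} d x : rename.

Definition pairing (R : realType) (X : normedModType R) (xs : dual X) (x : X) : R :=
  dual_fun xs x.

Section Opp.
Variables (R : realType) (X : normedModType R).
Lemma dual_opp_linear (f : dual X) (a : R) (u v : X) :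
  - f (a *: u + v) = a * - f u + - f v.
Proof. by rewrite dual_linear opprD mulrN. Qed.
Lemma dual_opp_cont (f : dual X) : continuous (fun x : X => - dual_fun f x).
Proof. move=> x; exact: (continuousN (dual_cont f x)). Qed.
Definition dual_opp (f : dual X) : dual X :=
  @Dual R X (fun x : X => - dual_fun f x) (dual_opp_linear f) (@dual_opp_cont f).
End Opp.

Definition setmap (R : realType) (X : normedModType R) := X -> set (dual X).

Definition dom (R : realType) (X : normedModType R) (T : setmap X) : set X :=
  [set x | T x != set0].

Definition negmap (R : realType) (X : normedModType R) (T : setmap X) : setmap X :=
  fun x => (@dual_opp R X) @` T x.

Definition pseudo_monotone (R : realType) (X : normedModType R) (S : setmap X) : Prop :=
  forall x y : X,
    (exists2 xs, S x xs & 0 <= pairing xs (y - x)) ->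
    forall ys, S y ys -> pairing ys (x - y) <= 0.

(* inf_{x* in T z} <x*, v>, as an extended real (inf of the empty set is +oo) *)
Definition inf_pair (R : realType) (X : normedModType R) (T : setmap X) (z v : X) : \bar R :=
  ereal_inf [set (pairing xs v)%:E | xs in T z].

Definition lower_sign_continuous_at (R : realType) (X : normedModType R)
    (T : setmap X) (x : X) : Prop :=
  forall v : X,
    (forall t : R, 0 < t < 1 -> (0 <= inf_pair T (x + t *: v)%R v)%E) ->
    (0 <= inf_pair T x v)%E.

(* Main.v *)
Require Import Defs.
From HB Require Import structures.
From mathcomp Require Import all_boot all_order all_algebra.
From mathcomp Require Import all_classical all_reals all_analysis.
From mathcomp Require Import lra.
Import numFieldNormedType.Exports.
Import Order.TTheory GRing.Theory Num.Theory.
Local Open Scope classical_set_scope.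
Local Open Scope ring_scope.

Lemma dual0 (R : realType) (X : normedModType R) (f : dual X) : dual_fun f 0 = 0.
Proof.
have := dual_linear f 1 0 0; rewrite scaler0 addr0 mul1r => h.
by have := congr1 (fun z => z - f 0) h; rewrite /= addrK subrr => <-.
Qed.

Lemma dualZ (R : realType) (X : normedModType R) (f : dual X) a u :
  dual_fun f (a *: u) = a * dual_fun f u.
Proof. by have := dual_linear f a u 0; rewrite !addr0 dual0 addr0. Qed.

Lemma dualN (R : realType) (X : normedModType R) (f : dual X) u :
  dual_fun f (- u) = - dual_fun f u.
Proof. by rewrite -scaleN1r dualZ mulN1r. Qed.

Theorem proposition6p1 (R : realType) (X : completeNormedModType R) (T : setmap X) :
  pseudo_monotone (negmap T) ->
  forall x : X, interior (dom T) x -> lower_sign_continuous_at T x.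
Proof.
move=> pm x /nbhs_ballP [e e0 he] v H.
set t : R := Num.min (1/2) (e / (`|v| + 1)).
have nv : 0 <= `|v| by [].
have v1 : 0 < `|v| + 1 by lra.
have t0 : 0 < t by rewrite lt_min; apply/andP; split; [lra| exact: divr_gt0].
have t1 : t < 1 by rewrite gt_min; apply/orP; left; lra.
have tle : t <= e / (`|v| + 1) by rewrite /t ge_min lexx orbT.
have dy : dom T (x + t *: v).
  apply: he; rewrite -ball_normE /= opprD addrA subrr sub0r normrN normrZ.
  rewrite (gtr0_norm t0).
  have : t * `|v| <= e / (`|v| + 1) * `|v| by apply: ler_wpM2r.
  have : e / (`|v| + 1) * `|v| < e.
    rewrite mulrAC ltr_pdivrMr //.
    rewrite ltr_pM2l //; lra.
  move=> h1 h2; exact: (le_lt_trans h2 h1).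
move: dy; rewrite /dom /= => /set0P [ys Tys].
have hys : 0 <= pairing ys v.
  rewrite -lee_fin; apply: (le_trans (H t _)); first by rewrite t0 t1.
  by apply: ereal_inf_lbound; exists ys.
apply: le_ereal_inf_tmp => _ [xs Txs <-].
rewrite lee_fin /pairing.
have := pm (x + t *: v) x _ (dual_opp xs) _.
rewrite /pairing /= addrAC subrr add0r dualZ => h.
have : - (t * dual_fun xs v) <= 0.
  apply: h; last by exists xs.
  exists (dual_opp ys); first by exists ys.
  rewrite /= opprD addrA subrr add0r dualN dualZ opprK; exact: mulr_ge0 (ltW t0) hys.
rewrite oppr_le0 => h2.
by rewrite -(pmulr_rge0 _ t0).
Qed.
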